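(* For real $p\neq 0$, the inequality $\left( \frac{\tanh x}{x}\right) ^{p}<\frac{2}{3}\left( \frac{x}{\sinh x}\right) ^{3p}+\frac{1}{3}$ holds for all $x\in(0,\infty)$ if and only if $p<0$ or $p\geq 12/5$. *)

(* Defs.v *)
From Stdlib Require Export Reals.

(* Main.v *)
Require Import Defs.
From Stdlib Require Import Reals Lra Lia ZArith List.
Import ListNotations.
Open Scope R_scope.

Definition zeval (p : list Z) (x : R) : R := fold_right (fun c acc => IZR c + x * acc) 0 p.
Fixpoint zadd (p q : list Z) : list Z :=
  match p, q with nil, _ => q | _, nil => p | a::p', b::q' => (a+b)%Z :: zadd p' q' end.
Definition zscal (c:Z) (p:list Z) := map (Z.mul c) p.
Fixpoint zmul (p q : list Z) : list Z :=
  match p with nil => nil | a :: p' => zadd (zscal a q) (0%Z :: zmul p' q) end.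
Fixpoint zpow (p : list Z) (n : nat) : list Z :=
  match n with O => [1%Z] | S m => zmul p (zpow p m) end.
Fixpoint zeven (p : list Z) : list Z :=
  match p with nil => nil | c :: p' => c :: 0%Z :: zeven p' end.
Fixpoint zsc (k : Z) (p : list Z) : list Z :=
  match p with nil => nil | c :: p' => (c * k ^ Z.of_nat (length p'))%Z :: zsc k p' end.
Fixpoint zshift (a : Z) (p : list Z) : list Z :=
  match p with nil => nil | c :: p' => let r := zshift a p' in zadd [c] (zadd (zscal a r) (0%Z :: r)) end.
Fixpoint zstretch (w : Z) (p : list Z) : list Z :=
  match p with nil => nil | c :: p' => c :: zscal w (zstretch w p') end.
Fixpoint zlb (p : list Z) : Z :=
  match p with nil => 0%Z | c :: p' => (c + Z.min 0 (zlb p'))%Z end.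
Fixpoint zstrip (p : list Z) : list Z :=
  match p with Z0 :: p' => zstrip p' | _ => p end.
Definition ok3 (p : list Z) (k a w : Z) : bool := (0 <? zlb (zstretch w (zshift a (zsc k p))))%Z.
Fixpoint chk (p : list Z) (l : list (Z*Z*Z)) : bool :=
  match l with
  | nil => true
  | (k,a,w) :: l' =>
      (0 <? k)%Z && (0 <? w)%Z && ok3 p k a w &&
      match l' with nil => true | (k',a',w') :: _ => Z.eqb ((a+w)*k') (a'*k) end && chk p l'
  end.

Lemma zeval_cons c p x : zeval (c :: p) x = IZR c + x * zeval p x.
Proof. reflexivity. Qed.
Lemma zeval_nil x : zeval nil x = 0.
Proof. reflexivity. Qed.

Lemma zeval_add p q x : zeval (zadd p q) x = zeval p x + zeval q x.
Proof.
  revert q; induction p as [|a p IH]; intros [|b q]; simpl; try ring.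
  rewrite plus_IZR. fold (zeval (zadd p q) x). fold (zeval p x). fold (zeval q x).
  rewrite IH. ring.
Qed.

Lemma zeval_scal c p x : zeval (zscal c p) x = IZR c * zeval p x.
Proof.
  induction p as [|a p IH]; simpl; [ring|].
  rewrite mult_IZR. fold (zeval (zscal c p) x). fold (zeval p x). rewrite IH. ring.
Qed.

Lemma zeval_mul p q x : zeval (zmul p q) x = zeval p x * zeval q x.
Proof.
  induction p as [|a p IH]; simpl; [ring|].
  rewrite zeval_add, zeval_scal. simpl. rewrite IH. fold (zeval p x). ring.
Qed.

Lemma zeval_pow p n x : zeval (zpow p n) x = zeval p x ^ n.
Proof.
  induction n as [|n IH]; simpl; [ring|]. rewrite zeval_mul, IH. ring.
Qed.

Lemma zeval_even p x : zeval (zeven p) x = zeval p (x * x).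
Proof.
  induction p as [|a p IH]; simpl; [ring|].
  fold (zeval (zeven p) x). fold (zeval p (x*x)). rewrite IH. ring.
Qed.

Lemma zeval_shift a p t : zeval (zshift a p) t = zeval p (IZR a + t).
Proof.
  induction p as [|c p IH]; [simpl; ring|].
  change (zshift a (c::p)) with (zadd [c] (zadd (zscal a (zshift a p)) (0%Z :: zshift a p))).
  rewrite !zeval_add, zeval_scal, !zeval_cons, IH, zeval_nil. ring.
Qed.

Lemma zeval_stretch w p t : zeval (zstretch w p) t = zeval p (IZR w * t).
Proof.
  induction p as [|c p IH]; [simpl; ring|].
  change (zstretch w (c::p)) with (c :: zscal w (zstretch w p)).
  rewrite !zeval_cons, zeval_scal, IH. ring.
Qed.

Lemma zeval_sc k p z : IZR k * zeval (zsc k p) (IZR k * z) = IZR k ^ length p * zeval p z.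
Proof.
  induction p as [|c p IH]; [simpl; ring|].
  change (zsc k (c::p)) with ((c * k ^ Z.of_nat (length p))%Z :: zsc k p).
  rewrite !zeval_cons. change (length (c::p)) with (S (length p)).
  rewrite mult_IZR, <- pow_IZR.
  replace (IZR k * (IZR c * IZR k ^ length p + IZR k * z * zeval (zsc k p) (IZR k * z)))
    with (IZR c * IZR k ^ S (length p) + IZR k * z * (IZR k * zeval (zsc k p) (IZR k * z))) by (simpl; ring).
  rewrite IH. simpl. ring.
Qed.

Lemma zlb_ok p t : 0 <= t <= 1 -> IZR (zlb p) <= zeval p t.
Proof.
  intros Ht. induction p as [|c p IH]; simpl; [lra|].
  fold (zeval p t). rewrite plus_IZR.
  destruct (Z.min_spec 0 (zlb p)) as [[H1 H2]|[H1 H2]]; rewrite H2.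
  - apply IZR_lt in H1.
    assert (0 <= t * zeval p t) by (apply Rmult_le_pos; lra). lra.
  - apply IZR_le in H1.
    assert (t * zeval p t >= t * IZR (zlb p)) by (apply Rle_ge, Rmult_le_compat_l; lra).
    assert (t * IZR (zlb p) >= IZR (zlb p)) by nra.
    lra.
Qed.

Lemma zstrip_pos p x : 0 < x -> 0 < zeval (zstrip p) x -> 0 < zeval p x.
Proof.
  intros Hx. induction p as [|c p IH]; simpl; [lra|].
  destruct c; simpl; auto.
  intros H. fold (zeval p x). specialize (IH H).
  assert (0 < x * zeval p x) by (apply Rmult_lt_0_compat; auto). lra.
Qed.

Lemma ok3_sound p k a w : (0 < k)%Z -> (0 < w)%Z -> ok3 p k a w = true ->
  forall x, IZR a / IZR k <= x <= (IZR a + IZR w) / IZR k -> 0 < zeval p x.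
Proof.
  intros Hk Hw H x Hx. unfold ok3 in H. apply Z.ltb_lt in H.
  apply IZR_lt in Hk. apply IZR_lt in Hw.
  set (t := (IZR k * x - IZR a) / IZR w).
  assert (Ht : 0 <= t <= 1).
  { unfold t. destruct Hx as [H1 H2].
    apply Rmult_le_compat_r with (r := IZR k) in H1; [|lra].
    apply Rmult_le_compat_r with (r := IZR k) in H2; [|lra].
    replace (IZR a / IZR k * IZR k) with (IZR a) in H1 by (field; lra).
    replace ((IZR a + IZR w) / IZR k * IZR k) with (IZR a + IZR w) in H2 by (field; lra).
    split.
    - apply Rmult_le_pos; [lra| apply Rlt_le, Rinv_0_lt_compat; lra].
    - apply Rmult_le_reg_r with (r := IZR w); [lra|]. unfold Rdiv.
      rewrite Rmult_assoc, Rinv_l by lra. lra. }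
  pose proof (zlb_ok (zstretch w (zshift a (zsc k p))) _ Ht) as HL. apply IZR_lt in H.
  rewrite zeval_stretch, zeval_shift in HL.
  replace (IZR a + IZR w * t) with (IZR k * x) in HL by (unfold t; field; lra).
  pose proof (zeval_sc k p x) as HS.
  assert (0 < IZR k ^ length p) by (apply pow_lt; lra).
  assert (0 < IZR k * zeval (zsc k p) (IZR k * x)) by (apply Rmult_lt_0_compat; lra).
  rewrite HS in H1.
  destruct (Rlt_or_le 0 (zeval p x)) as [?|Hn]; auto.
  assert (IZR k ^ length p * zeval p x <= 0).
  { nra. }
  lra.
Qed.

Definition istart (l : list (Z*Z*Z)) : R :=
  match l with nil => 0 | (k,a,w) :: _ => IZR a / IZR k end.
Fixpoint iend (l : list (Z*Z*Z)) : R :=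
  match l with nil => 0 | (k,a,w) :: nil => (IZR a + IZR w) / IZR k | _ :: l' => iend l' end.

Lemma chk_sound p l : chk p l = true -> l <> nil ->
  forall x, istart l <= x <= iend l -> 0 < zeval p x.
Proof.
  induction l as [|[[k a] w] l IH]; [congruence|].
  intros H _ x Hx. simpl in H.
  apply andb_prop in H as [H Hr]. apply andb_prop in H as [H Hc].
  apply andb_prop in H as [H Hok]. apply andb_prop in H as [Hk Hw].
  apply Z.ltb_lt in Hk. apply Z.ltb_lt in Hw.
  simpl in Hx.
  destruct l as [|[[k' a'] w'] l'].
  - exact (ok3_sound p k a w Hk Hw Hok x Hx).
  - apply Z.eqb_eq in Hc.
    assert (Hmid : (IZR a + IZR w) / IZR k = IZR a' / IZR k').
    { apply IZR_lt in Hk.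
      assert (Hk' : (0 < k')%Z).
      { simpl in Hr. apply andb_prop in Hr as [Hr _]. apply andb_prop in Hr as [Hr _].
        apply andb_prop in Hr as [Hr _]. apply andb_prop in Hr as [Hr _]. apply Z.ltb_lt; auto. }
      apply IZR_lt in Hk'.
      rewrite <- plus_IZR. apply (f_equal IZR) in Hc. rewrite !mult_IZR in Hc.
      field_simplify_eq; try lra. }
    destruct (Rle_or_lt x ((IZR a + IZR w) / IZR k)).
    + apply (ok3_sound p k a w Hk Hw Hok x). lra.
    + apply IH; auto; [congruence|]. simpl. split; [lra|]. destruct Hx as [_ Hx]. exact Hx.
Qed.

Lemma chk_strip_sound p l : chk (zstrip p) l = true -> l <> nil ->
  forall x, 0 < x -> istart l <= x <= iend l -> 0 < zeval p x.
Proof.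
  intros H Hl x Hx Hr. apply zstrip_pos; auto. eapply chk_sound; eauto.
Qed.

Lemma zeval_const c x : zeval [c] x = IZR c.
Proof. simpl. ring. Qed.
Lemma zeval_x1 x : zeval [0%Z; 1%Z] x = x.
Proof. simpl. ring. Qed.

From Coquelicot Require Import Coquelicot.
Import ListNotations.
Open Scope R_scope.

Lemma mono_le (f df : R -> R) (a b : R) : a <= b ->
  (forall x, a <= x <= b -> is_derive f x (df x)) ->
  (forall x, a <= x <= b -> 0 <= df x) -> f a <= f b.
Proof.
  intros Hab Hd Hp.
  destruct (MVT_gen f a b df) as [c [Hc Heq]].
  - intros x Hx. apply Hd. rewrite Rmin_left, Rmax_right in Hx by lra. lra.
  - intros x Hx. rewrite Rmin_left, Rmax_right in Hx by lra.
    apply continuity_pt_filterlim. apply (ex_derive_continuous (K:=R_AbsRing) (V:=R_NormedModule) f x). eexists; apply Hd; lra.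
  - rewrite Rmin_left, Rmax_right in Hc by lra.
    assert (0 <= df c * (b-a)) by (apply Rmult_le_pos; [apply Hp; lra| lra]). lra.
Qed.

Lemma mono_ge (f df : R -> R) (a b : R) : a <= b ->
  (forall x, a <= x <= b -> is_derive f x (df x)) ->
  (forall x, a <= x <= b -> df x <= 0) -> f b <= f a.
Proof.
  intros Hab Hd Hp.
  destruct (MVT_gen f a b df) as [c [Hc Heq]].
  - intros x Hx. apply Hd. rewrite Rmin_left, Rmax_right in Hx by lra. lra.
  - intros x Hx. rewrite Rmin_left, Rmax_right in Hx by lra.
    apply continuity_pt_filterlim. apply (ex_derive_continuous (K:=R_AbsRing) (V:=R_NormedModule) f x). eexists; apply Hd; lra.
  - rewrite Rmin_left, Rmax_right in Hc by lra.
    assert (df c * (b-a) <= 0) by (apply Rmult_le_0_r; [apply Hp; lra| lra]). lra.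
Qed.

Fixpoint ec (n : nat) : R := match n with O => 1 | S m => ec m / INR (S m) end.
Fixpoint T (n : nat) (x : R) : R := match n with O => 1 | S m => T m x + ec (S m) * x ^ (S m) end.

Lemma ec_pos n : 0 < ec n.
Proof. induction n; [simpl; lra|]. change (ec (S n)) with (ec n / INR (S n)). apply Rdiv_lt_0_compat; auto. apply lt_0_INR; lia. Qed.

Lemma T_0 n : T n 0 = 1.
Proof. induction n; simpl; auto. rewrite IHn. ring. Qed.

Lemma T_derive n x : is_derive (T (S n)) x (T n x).
Proof.
  induction n as [|n IH].
  - simpl. auto_derive; auto. field.
  - change (T (S (S n))) with (fun y => T (S n) y + ec (S (S n)) * y ^ (S (S n))).
    change (T (S n) x) with (T n x + ec (S n) * x ^ (S n)).
    assert (H2 : is_derive (fun y => ec (S (S n)) * y ^ (S (S n))) x (ec (S n) * x ^ (S n))).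
    { auto_derive; auto. change (ec (S (S n))) with (ec (S n) / INR (S (S n))).
      change (match n with 0%nat => 1 | S _ => INR n + 1 end) with (INR (S n)).
      change (ec (S n)) with (ec n / INR (S n)). simpl pow.
      pose proof (pos_INR (S n)). pose proof (lt_0_INR (S n) ltac:(lia)). field. lra. }
    exact (is_derive_plus _ _ _ _ _ IH H2).
Qed.

Lemma exp_ge_T n x : 0 <= x -> T n x <= exp x.
Proof.
  revert x. induction n as [|n IH]; intros x Hx.
  - simpl. pose proof (exp_ineq1_le x). lra.
  - assert (H := mono_le (fun y => exp y - T (S n) y) (fun y => exp y - T n y) 0 x Hx).
    cbv beta in H. rewrite T_0, exp_0 in H.
    cut (0 <= exp x - T (S n) x); [lra|]. replace 0 with (1 - 1) by ring. apply H.
    + intros y Hy. exact (is_derive_minus _ _ _ _ _ (is_derive_exp y) (T_derive n y)).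
    + intros y Hy. specialize (IH y ltac:(lra)). lra.
Qed.

Lemma exp_neg_T n x : 0 <= x ->
  (Nat.even n = true -> exp (-x) <= T n (-x)) /\ (Nat.even n = false -> T n (-x) <= exp (-x)).
Proof.
  revert x. induction n as [|n IH]; intros x Hx.
  - simpl. split; intros HH; [|discriminate HH].
    pose proof (exp_ineq1_le x). pose proof (exp_pos (-x)).
    assert (exp (-x) * exp x = 1) by (rewrite <- exp_plus; replace (-x + x) with 0 by ring; apply exp_0).
    nra.
  - set (g := fun y => exp (- y) - T (S n) (- y)).
    set (dg := fun y => - (exp (- y) - T n (- y))).
    assert (Hd : forall y, is_derive g y (dg y)).
    { intros y. unfold g, dg.
      assert (H1 : is_derive (fun y => exp (- y)) y (- exp (- y))) by (auto_derive; auto; ring).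
      assert (H2 : is_derive (fun y => T (S n) (- y)) y (- T n (- y))).
      { assert (Ho : is_derive Ropp y (-1)) by (auto_derive; auto).
        pose proof (is_derive_comp (T (S n)) Ropp y _ _ (T_derive n (- y)) Ho) as H3.
        replace (- T n (- y)) with (scal (-1) (T n (- y))); [exact H3|].
        unfold scal; simpl; unfold mult; simpl; ring. }
      pose proof (is_derive_minus _ _ _ _ _ H1 H2) as H4.
      replace (- (exp (- y) - T n (- y))) with (minus (- exp (- y)) (- T n (- y))); [exact H4|].
      unfold minus, plus, opp; simpl. ring. }
    assert (g0 : g 0 = 0) by (unfold g; rewrite Ropp_0, T_0, exp_0; ring).
    rewrite Nat.even_succ, <- Nat.negb_even.
    destruct (Nat.even n) eqn:E; cbn [negb]; split; intros HH; try discriminate.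
    + (* n even: exp(-y) <= T n (-y), so dg >= 0, g increasing: g x >= 0 *)
      assert (H := mono_le g dg 0 x Hx (fun y _ => Hd y)).
      assert (0 <= g x). { rewrite <- g0. apply H. intros y Hy. unfold dg.
        destruct (IH y ltac:(lra)) as [H1 _]. specialize (H1 eq_refl). lra. }
      unfold g in *; cbv beta in *. lra.
    + assert (H := mono_ge g dg 0 x Hx (fun y _ => Hd y)).
      assert (g x <= g 0).
      { apply H. intros y Hy. unfold dg. destruct (IH y ltac:(lra)) as [_ H1]. specialize (H1 eq_refl). lra. }
      unfold g in *; cbv beta in *; rewrite g0 in *. lra.
Qed.

Lemma isd_plus f g x a b : is_derive f x a -> is_derive g x b -> is_derive (fun y => f y + g y) x (a + b).
Proof. intros H1 H2. exact (is_derive_plus _ _ _ _ _ H1 H2). Qed.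
Lemma isd_minus f g x a b : is_derive f x a -> is_derive g x b -> is_derive (fun y => f y - g y) x (a - b).
Proof. intros H1 H2. exact (is_derive_minus _ _ _ _ _ H1 H2). Qed.

Lemma Rpower_1_base y : Rpower 1 y = 1.
Proof. unfold Rpower. rewrite ln_1, Rmult_0_r. apply exp_0. Qed.

Lemma dRpow r t : 0 < t -> is_derive (fun t => Rpower t r) t (r * Rpower t (r - 1)).
Proof. intros Ht. apply is_derive_Reals. apply derivable_pt_lim_power; auto. Qed.

Lemma dRP r w : -1 < w -> is_derive (fun w => Rpower (1 + w) r) w (r * Rpower (1 + w) (r - 1)).
Proof.
  intros Hw.
  assert (H1 : is_derive (fun w => 1 + w) w 1) by (auto_derive; auto).
  pose proof (is_derive_comp (fun t => Rpower t r) (fun w => 1 + w) w _ _ (dRpow r (1+w) ltac:(lra)) H1) as H.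
  replace (r * Rpower (1 + w) (r - 1)) with (scal 1 (r * Rpower (1 + w) (r - 1))); [exact H|].
  unfold scal; simpl; unfold mult; simpl; ring.
Qed.

Lemma Rpow_le1 w e : 0 <= w -> e <= 0 -> Rpower (1 + w) e <= 1.
Proof.
  intros Hw He. assert (H := Rle_Rpower (1 + w) e 0 ltac:(lra) He).
  rewrite Rpower_O in H by lra. exact H.
Qed.

Lemma L1 q w : 0 <= q -> 0 <= w -> 1 - q * w <= Rpower (1 + w) (- q).
Proof.
  intros Hq Hw.
  assert (H := mono_le (fun w => Rpower (1 + w) (- q) + (q * w - 1))
     (fun w => - q * Rpower (1 + w) (- q - 1) + q) 0 w Hw).
  cbv beta in H. rewrite Rplus_0_r, Rpower_1_base in H.
  cut (0 <= Rpower (1 + w) (- q) + (q * w - 1)); [lra|].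
  replace 0 with (1 + (q * 0 - 1)) by ring. apply H.
  - intros y Hy. apply isd_plus; [apply dRP; lra| auto_derive; auto; field].
  - intros y Hy. pose proof (Rpow_le1 y (- q - 1) ltac:(lra) ltac:(lra)). nra.
Qed.

Lemma L2 q w : 0 <= q -> 0 <= w -> Rpower (1 + w) (- q) <= 1 - q * w + q * (q + 1) / 2 * w ^ 2.
Proof.
  intros Hq Hw.
  assert (H := mono_le (fun w => (1 - q * w + q * (q + 1) / 2 * w ^ 2) - Rpower (1 + w) (- q))
     (fun w => (- q + q * (q + 1) * w) - (- q * Rpower (1 + w) (- q - 1))) 0 w Hw).
  cbv beta in H. rewrite Rplus_0_r, Rpower_1_base in H.
  cut (0 <= (1 - q * w + q * (q + 1) / 2 * w ^ 2) - Rpower (1 + w) (- q)); [lra|].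
  replace 0 with ((1 - q * 0 + q * (q + 1) / 2 * 0 ^ 2) - 1) by ring. apply H.
  - intros y Hy. apply isd_minus; [auto_derive; auto; field| apply dRP; lra].
  - intros y Hy. pose proof (L1 (q + 1) y ltac:(lra) ltac:(lra)) as HL.
    replace (- q - 1) with (- (q + 1)) by ring. nra.
Qed.

Lemma L3 q w : 0 <= q -> 0 <= w ->
  1 - q * w + q * (q + 1) / 2 * w ^ 2 - q * (q + 1) * (q + 2) / 6 * w ^ 3 <= Rpower (1 + w) (- q).
Proof.
  intros Hq Hw.
  assert (H := mono_le (fun w => Rpower (1 + w) (- q) - (1 - q * w + q * (q + 1) / 2 * w ^ 2 - q * (q + 1) * (q + 2) / 6 * w ^ 3))
     (fun w => (- q * Rpower (1 + w) (- q - 1)) - (- q + q * (q + 1) * w - q * (q + 1) * (q + 2) / 2 * w ^ 2)) 0 w Hw).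
  cbv beta in H. rewrite Rplus_0_r, Rpower_1_base in H.
  cut (0 <= Rpower (1 + w) (- q) - (1 - q * w + q * (q + 1) / 2 * w ^ 2 - q * (q + 1) * (q + 2) / 6 * w ^ 3)); [lra|].
  replace 0 with (1 - (1 - q * 0 + q * (q + 1) / 2 * 0 ^ 2 - q * (q + 1) * (q + 2) / 6 * 0 ^ 3)) by ring. apply H.
  - intros y Hy. apply isd_minus; [apply dRP; lra| auto_derive; auto; field].
  - intros y Hy. pose proof (L2 (q + 1) y ltac:(lra) ltac:(lra)) as HL.
    replace (- q - 1) with (- (q + 1)) by ring.
    replace (- (q + 1) * y) with (- ((q + 1) * y)) in HL by ring.
    assert (q * (1 - (q + 1) * y + (q + 1) * (q + 1 + 1) / 2 * y ^ 2 - Rpower (1 + y) (- (q + 1))) >= 0) by nra.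
    nra.
Qed.

Lemma bernoulli r t : 1 <= r -> 0 < t -> 1 + r * (t - 1) <= Rpower t r.
Proof.
  intros Hr Ht.
  set (g := fun t => Rpower t r - (1 + r * (t - 1))).
  set (dg := fun t => r * Rpower t (r - 1) - r).
  assert (Hd : forall y, 0 < y -> is_derive g y (dg y)).
  { intros y Hy. unfold g, dg. apply isd_minus; [apply dRpow; auto| auto_derive; auto; field]. }
  assert (g1 : g 1 = 0) by (unfold g; rewrite Rpower_1_base; ring).
  cut (0 <= g t); [unfold g; lra|]. rewrite <- g1.
  destruct (Rle_or_lt 1 t) as [H1|H1].
  - apply (mono_le g dg 1 t H1); [intros y Hy; apply Hd; lra|].
    intros y Hy. unfold dg. assert (1 <= Rpower y (r - 1)).
    { assert (H := Rle_Rpower y 0 (r - 1) ltac:(lra) ltac:(lra)). rewrite Rpower_O in H by lra. exact H. }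
    nra.
  - apply (mono_ge g dg t 1 ltac:(lra)); [intros y Hy; apply Hd; lra|].
    intros y Hy. unfold dg. assert (Rpower y (r - 1) <= 1).
    { assert (H := Rle_Rpower_l y 1 (r - 1) ltac:(lra) ltac:(lra)). rewrite Rpower_1_base in H. exact H. }
    nra.
Qed.

Lemma Rpower_inv_base a r : 0 < a -> Rpower (/ a) r = / Rpower a r.
Proof. intros Ha. unfold Rpower. rewrite ln_Rinv by auto. rewrite <- exp_Ropp. f_equal. ring. Qed.

Lemma jensen r l s : 1 <= r -> 0 <= l <= 1 -> 0 < s ->
  Rpower (l * s + (1 - l)) r <= l * Rpower s r + (1 - l).
Proof.
  intros Hr Hl Hs.
  set (m := l * s + (1 - l)).
  assert (Hm : 0 < m) by (unfold m; destruct (Req_dec l 1); subst; nra).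
  set (M := Rpower m r). assert (HM : 0 < M) by (unfold M, Rpower; apply exp_pos).
  pose proof (bernoulli r (s / m) Hr ltac:(apply Rdiv_lt_0_compat; auto)) as B1.
  pose proof (bernoulli r (/ m) Hr ltac:(apply Rinv_0_lt_compat; auto)) as B2.
  unfold Rdiv in B1. rewrite <- Rpower_mult_distr, Rpower_inv_base in B1 by (auto; apply Rinv_0_lt_compat; auto).
  rewrite Rpower_inv_base in B2 by auto. fold M in B1, B2.
  set (A := Rpower s r) in *.
  assert (E1 : A >= M * (1 + r * (s * / m - 1))).
  { apply Rmult_le_compat_l with (r := M) in B1; [|lra].
    replace (M * (A * / M)) with A in B1 by (field; lra). lra. }
  assert (E2 : 1 >= M * (1 + r * (/ m - 1))).
  { apply Rmult_le_compat_l with (r := M) in B2; [|lra].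
    replace (M * / M) with 1 in B2 by (field; lra). lra. }
  assert (E3 : l * (M * (1 + r * (s * / m - 1))) + (1 - l) * (M * (1 + r * (/ m - 1))) = M).
  { transitivity (M * (1 + r * ((l * s + (1 - l)) * / m) - r)); [ring|].
    fold m. rewrite Rinv_r by lra. ring. }
  nra.
Qed.

Lemma sinh_E x : sinh x = (exp x - / exp x) / 2.
Proof. unfold sinh. rewrite exp_Ropp. reflexivity. Qed.
Lemma cosh_E x : cosh x = (exp x + / exp x) / 2.
Proof. unfold cosh. rewrite exp_Ropp. reflexivity. Qed.

Lemma exp_ge1 x : 0 <= x -> 1 <= exp x.
Proof. intros. pose proof (exp_ineq1_le x). lra. Qed.

Lemma sinh_nonneg x : 0 <= x -> 0 <= sinh x.
Proof.
  intros Hx. rewrite sinh_E. pose proof (exp_ge1 x Hx).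
  assert (/ exp x <= 1) by (rewrite <- Rinv_1; apply Rinv_le_contravar; lra). lra.
Qed.

Lemma sinh_pos x : 0 < x -> 0 < sinh x.
Proof. intros Hx. rewrite <- sinh_0. apply sinh_lt. auto. Qed.

Lemma cosh_ge1 x : 1 <= cosh x.
Proof.
  rewrite cosh_E. pose proof (exp_pos x).
  assert (exp x + / exp x - 2 = (exp x - 1) ^ 2 / exp x) by (field; lra).
  assert (0 <= (exp x - 1) ^ 2 / exp x) by (apply Rdiv_le_0_compat; [apply pow2_ge_0| lra]). lra.
Qed.

Lemma cosh2_sinh2 x : cosh x ^ 2 - sinh x ^ 2 = 1.
Proof. rewrite cosh_E, sinh_E. pose proof (exp_pos x). field. lra. Qed.

Lemma dsinh x : is_derive sinh x (cosh x).
Proof. apply is_derive_Reals. apply derivable_pt_lim_sinh. Qed.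
Lemma dcosh x : is_derive cosh x (sinh x).
Proof. apply is_derive_Reals. apply derivable_pt_lim_cosh. Qed.

Lemma isd_mult f g x a b : is_derive f x a -> is_derive g x b ->
  is_derive (fun y => f y * g y) x (a * g x + f x * b).
Proof.
  intros H1 H2. pose proof (is_derive_mult f g x a b H1 H2 (fun n m => Rmult_comm n m)) as H. exact H.
Qed.

Lemma isd_id x : is_derive (fun y => y) x 1.
Proof. auto_derive; auto. Qed.
Lemma isd_const c x : is_derive (fun _ => c) x 0.
Proof. auto_derive; auto. Qed.

Lemma xcosh_ge_sinh x : 0 <= x -> sinh x <= x * cosh x.
Proof.
  intros Hx.
  assert (H := mono_le (fun y => y * cosh y - sinh y) (fun y => (1 * cosh y + y * sinh y) - cosh y) 0 x Hx).
  cbv beta in H. rewrite sinh_0, Rmult_0_l in H.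
  cut (0 - 0 <= x * cosh x - sinh x); [lra|]. apply H.
  - intros y _. apply isd_minus; [apply isd_mult; [apply isd_id| apply dcosh]| apply dsinh].
  - intros y Hy. pose proof (sinh_nonneg y ltac:(lra)). nra.
Qed.

Lemma H_nonneg x : 0 <= x -> 3 * sinh x * cosh x <= 2 * x * cosh x ^ 2 + x.
Proof.
  intros Hx.
  set (h := fun y => 2 * y * (cosh y * cosh y) + y - 3 * (sinh y * cosh y)).
  set (dh := fun y => (2 * 1 * (cosh y * cosh y) + 2 * y * (sinh y * cosh y + cosh y * sinh y)) + 1
                       - 3 * (cosh y * cosh y + sinh y * sinh y)).
  assert (H := mono_le h dh 0 x Hx).
  unfold h in H; cbv beta in H. rewrite sinh_0 in H.
  cut (0 <= h x); [unfold h; simpl; lra|]. unfold h.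
  replace 0 with (2 * 0 * (cosh 0 * cosh 0) + 0 - 3 * (0 * cosh 0)) by ring. apply H.
  - intros y _. unfold dh.
    apply isd_minus; [apply isd_plus; [|apply isd_id]|].
    + replace (2 * 1 * (cosh y * cosh y) + 2 * y * (sinh y * cosh y + cosh y * sinh y))
        with ((0 * y + 2 * 1) * (cosh y * cosh y) + 2 * y * (sinh y * cosh y + cosh y * sinh y)) by ring.
      apply (isd_mult (fun y => 2 * y) (fun y => cosh y * cosh y)).
      * apply (isd_mult (fun _ => 2) (fun y => y)); [apply isd_const| apply isd_id].
      * apply (isd_mult cosh cosh); apply dcosh.
    + replace (3 * (cosh y * cosh y + sinh y * sinh y)) with (0 * (sinh y * cosh y) + 3 * (cosh y * cosh y + sinh y * sinh y)) by ring.
      apply (isd_mult (fun _ => 3) (fun y => sinh y * cosh y)); [apply isd_const| apply (isd_mult sinh cosh); [apply dsinh| apply dcosh]].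
  - intros y Hy. unfold dh.
    pose proof (cosh2_sinh2 y). pose proof (sinh_nonneg y ltac:(lra)).
    pose proof (xcosh_ge_sinh y ltac:(lra)).
    assert (E : 2 * 1 * (cosh y * cosh y) + 2 * y * (sinh y * cosh y + cosh y * sinh y) + 1 -
       3 * (cosh y * cosh y + sinh y * sinh y) = 4 * sinh y * (y * cosh y - sinh y)) by nra.
    rewrite E. apply Rmult_le_pos; [lra|lra].
Qed.

Lemma ln_le_mono a b : 0 < a -> a <= b -> ln a <= ln b.
Proof. intros Ha Hab. destruct (Req_dec a b); [subst; lra|]. left. apply ln_increasing; lra. Qed.

Lemma ln_le_cancel a b : 0 < a -> 0 < b -> ln a <= ln b -> a <= b.
Proof. intros Ha Hb H. destruct (Rle_or_lt a b); auto. apply ln_increasing in H0; auto. lra. Qed.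

Lemma ln_le_sub1 a : 0 < a -> ln a <= a - 1.
Proof. intros Ha. pose proof (exp_ineq1_le (ln a)). rewrite exp_ln in H by auto. lra. Qed.

Lemma isd_ln g x a : 0 < g x -> is_derive g x a -> is_derive (fun y => ln (g y)) x (a / g x).
Proof.
  intros Hg Hd.
  assert (Hl : is_derive ln (g x) (/ g x)) by (apply is_derive_Reals; apply derivable_pt_lim_ln; auto).
  pose proof (is_derive_comp ln g x _ _ Hl Hd) as H.
  replace (a / g x) with (scal a (/ g x)); [exact H|]. unfold scal; simpl; unfold mult; simpl. field. lra.
Qed.

Lemma sinh_ge_x x : 0 <= x -> x <= sinh x.
Proof.
  intros Hx.
  assert (H := mono_le (fun y => sinh y - y) (fun y => cosh y - 1) 0 x Hx).
  cbv beta in H. rewrite sinh_0 in H.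
  cut (0 - 0 <= sinh x - x); [lra|]. apply H.
  - intros y _. apply isd_minus; [apply dsinh| apply isd_id].
  - intros y _. pose proof (cosh_ge1 y). lra.
Qed.

Lemma cosh_small e : 0 <= e <= 1/2 -> cosh e - 1 <= 2 * e ^ 2.
Proof.
  intros He. rewrite cosh_E.
  pose proof (exp_pos e) as Hp.
  assert (H1 : 1 - e <= / exp e).
  { rewrite <- exp_Ropp. pose proof (exp_ineq1_le (- e)). lra. }
  assert (H2 : / exp e <= 1 - e + e ^ 2 / 2).
  { destruct (exp_neg_T 2 e ltac:(lra)) as [H _]. specialize (H eq_refl).
    rewrite exp_Ropp in H. simpl in H. lra. }
  assert (H3 : exp e <= 1 + e + 2 * e ^ 2).
  { assert (exp e * / exp e = 1) by (field; lra).
    assert ((1 - e) * (1 + e + 2 * e ^ 2) >= 1) by nra. nra. }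
  lra.
Qed.

Lemma lazarevic x : 0 < x -> x ^ 3 * cosh x <= sinh x ^ 3.
Proof.
  intros Hx.
  set (f := fun y => 3 * ln (sinh y) - 3 * ln y - ln (cosh y)).
  set (df := fun y => 3 * (cosh y / sinh y) - 3 * (1 / y) - sinh y / cosh y).
  assert (Hd : forall y, 0 < y -> is_derive f y (df y)).
  { intros y Hy. unfold f, df. pose proof (sinh_pos y Hy). pose proof (cosh_ge1 y).
    apply isd_minus; [apply isd_minus|].
    - replace (3 * (cosh y / sinh y)) with (0 * ln (sinh y) + 3 * (cosh y / sinh y)) by ring.
      apply (isd_mult (fun _ => 3) (fun y => ln (sinh y))); [apply isd_const|].
      apply isd_ln; [lra| apply dsinh].
    - replace (3 * (1 / y)) with (0 * ln y + 3 * (1 / y)) by ring.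
      apply (isd_mult (fun _ => 3) ln); [apply isd_const|].
      apply (isd_ln (fun y => y)); [lra| apply isd_id].
    - apply isd_ln; [lra| apply dcosh]. }
  assert (Hdf : forall y, 0 < y -> 0 <= df y).
  { intros y Hy. unfold df. pose proof (sinh_pos y Hy). pose proof (cosh_ge1 y).
    pose proof (H_nonneg y ltac:(lra)). pose proof (cosh2_sinh2 y).
    assert (E : 3 * (cosh y / sinh y) - 3 * (1 / y) - sinh y / cosh y
              = (2 * y * cosh y ^ 2 + y - 3 * sinh y * cosh y) / (y * sinh y * cosh y)).
    { field_simplify_eq; [|repeat split; lra]. nra. }
    rewrite E. apply Rdiv_le_0_compat; [lra|]. apply Rmult_lt_0_compat; [apply Rmult_lt_0_compat|]; lra. }
  assert (Hfx : 0 <= f x).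
  { destruct (Rle_or_lt 0 (f x)) as [?|Hneg]; auto. exfalso.
    set (e := Rmin (x / 2) (Rmin (1/2) (- f x / 4))).
    assert (He1 : 0 < e) by (unfold e; repeat apply Rmin_pos; lra).
    assert (He2 : e <= x / 2) by apply Rmin_l.
    assert (He3 : e <= 1/2) by (unfold e; eapply Rle_trans; [apply Rmin_r| apply Rmin_l]).
    assert (He4 : e <= - f x / 4) by (unfold e; eapply Rle_trans; [apply Rmin_r| apply Rmin_r]).
    assert (Hfe : f e <= f x).
    { apply (mono_le f df e x ltac:(lra)); intros y Hy; [apply Hd| apply Hdf]; lra. }
    assert (Hfe2 : - (2 * e ^ 2) <= f e).
    { unfold f. pose proof (sinh_ge_x e ltac:(lra)). pose proof (cosh_ge1 e).
      pose proof (ln_le_mono e (sinh e) He1 H). pose proof (ln_le_sub1 (cosh e) ltac:(lra)).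
      pose proof (cosh_small e ltac:(lra)). lra. }
    nra. }
  unfold f in Hfx. pose proof (sinh_pos x Hx). pose proof (cosh_ge1 x).
  apply ln_le_cancel.
  - apply Rmult_lt_0_compat; [apply pow_lt; lra| lra].
  - apply pow_lt; lra.
  - rewrite ln_mult, !ln_pow by (try apply pow_lt; lra). simpl INR. lra.
Qed.

Definition hZ : list Z := [(3774873600); (-251658240); (67108864); (-20611800); (6750225); (-1907775); (286650)]%Z.
Definition kZ : list Z := [(125829120); (-12582912); (1048576); (-89550); (7995); (-840); (90)]%Z.
Definition Dh : Z := 3774873600.
Definition Dk : Z := 125829120.
Definition PZ : list Z := [(39916800); (-39916800); (19958400); (-6652800); (1663200); (-332640); (55440); (-7920); (990); (-110); (11); (-1)]%Z.
Definition DP : Z := 39916800.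
Definition IC1 : list (Z*Z*Z) := [(5,0,4); (5,4,4)]%Z.
Definition IC2 : list (Z*Z*Z) := [(10,0,1); (20,2,1); (20,3,1); (5,1,1); (5,2,2); (5,4,2); (5,6,2)]%Z.
Definition IC3 : list (Z*Z*Z) := [(5,0,1); (5,1,1); (5,2,2); (5,4,2); (5,6,2)]%Z.
Definition IC4 : list (Z*Z*Z) := [(25,0,16); (25,16,16); (25,32,16); (25,48,16)]%Z.
Definition ICh : list (Z*Z*Z) := (((25,0,64)) :: nil)%Z.
Definition ICk : list (Z*Z*Z) := (((25,0,64)) :: nil)%Z.
Definition x1 : list Z := [0; 1]%Z.
Definition P2 := zmul PZ PZ.
Definition C2 : list Z := zadd (zmul (zmul (zpow (zeven hZ) 5) (zadd (((DP*DP)%Z) :: nil) P2)) x1)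
                           (zscal (-1) (zmul (zpow ((Dh) :: nil) 5) (zadd (((DP*DP)%Z) :: nil) (zscal (-1) P2)))).
Definition C3 : list Z := zadd (zscal 8 (zmul (zmul (zpow ((Dk) :: nil) 5) (zpow ((DP) :: nil) 3)) (zmul (zpow x1 3) (zpow PZ 3))))
                           (zscal (-1) (zmul (zpow (zeven kZ) 5) (zpow (zadd (((DP*DP)%Z) :: nil) (zscal (-1) P2)) 3))).
Definition C4 : list Z := zadd (zadd (zscal 2 (zmul (zpow ((Dh) :: nil) 12) (zpow kZ 12))) (zmul (zpow ((Dk) :: nil) 12) (zpow ((Dh) :: nil) 12)))
                           (zscal (-3) (zmul (zpow ((Dk) :: nil) 12) (zpow hZ 12))).

Lemma C1ok : chk (zstrip PZ) IC1 = true. Proof. vm_compute. reflexivity. Qed.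
Lemma C2ok : chk (zstrip C2) IC2 = true. Proof. vm_compute. reflexivity. Qed.
Lemma C3ok : chk (zstrip C3) IC3 = true. Proof. vm_compute. reflexivity. Qed.
Lemma C4ok : chk (zstrip C4) IC4 = true. Proof. vm_compute. reflexivity. Qed.
Lemma Chok : chk (zstrip hZ) ICh = true. Proof. vm_compute. reflexivity. Qed.
Lemma Ckok : chk (zstrip kZ) ICk = true. Proof. vm_compute. reflexivity. Qed.

Ltac zsimp := repeat (rewrite ?zeval_add, ?zeval_mul, ?zeval_scal, ?zeval_pow, ?zeval_even, ?zeval_const, ?zeval_x1, ?mult_IZR).

Lemma PZ_T x : zeval PZ x / IZR DP = T 11 (- x).
Proof. unfold PZ, DP, zeval, T, ec. simpl. field. Qed.

Lemma C2_eval x : zeval C2 x = zeval hZ (x * x) ^ 5 * (IZR DP * IZR DP + zeval PZ x * zeval PZ x) * x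
   - IZR Dh ^ 5 * (IZR DP * IZR DP - zeval PZ x * zeval PZ x).
Proof. unfold C2, P2, x1. zsimp. ring. Qed.
Lemma C3_eval x : zeval C3 x = 8 * (IZR Dk ^ 5 * IZR DP ^ 3) * (x ^ 3 * zeval PZ x ^ 3)
   - zeval kZ (x * x) ^ 5 * (IZR DP * IZR DP - zeval PZ x * zeval PZ x) ^ 3.
Proof. unfold C3, P2, x1. zsimp. ring. Qed.
Lemma C4_eval y : zeval C4 y = 2 * IZR Dh ^ 12 * zeval kZ y ^ 12 + IZR Dk ^ 12 * IZR Dh ^ 12
   - 3 * IZR Dk ^ 12 * zeval hZ y ^ 12.
Proof. unfold C4. zsimp. ring. Qed.

Lemma div_le_div A B C D : 0 < B -> 0 < D -> A * D <= C * B -> A / B <= C / D.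
Proof.
  intros HB HD H. apply Rmult_le_reg_r with (r := B * D); [nra|].
  replace (A / B * (B * D)) with (A * D) by (field; lra).
  replace (C / D * (B * D)) with (C * B) by (field; lra). lra.
Qed.

Lemma Rpow_5_12 c : 0 < c -> Rpower (c ^ 5) (12 / 5) = c ^ 12.
Proof.
  intros Hc. rewrite <- (Rpower_pow 5) by auto. rewrite Rpower_mult.
  rewrite <- (Rpower_pow 12) by auto. f_equal. simpl. field.
Qed.

Lemma Rpow_36 c : 0 < c -> Rpower c (36 / 5) = Rpower (c ^ 3) (12 / 5).
Proof.
  intros Hc. rewrite <- (Rpower_pow 3) by auto. rewrite Rpower_mult. f_equal. simpl. field.
Qed.

Lemma in_range l x lo hi : istart l <= lo -> hi <= iend l -> lo <= x <= hi -> istart l <= x <= iend l.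
Proof. intros. lra. Qed.

Lemma suff_small x : 0 < x <= 8 / 5 ->
  Rpower (tanh x / x) (12 / 5) < 2 / 3 * Rpower (x / sinh x) (36 / 5) + 1 / 3.
Proof.
  intros Hx.
  pose proof (exp_pos x) as HEp. pose proof (exp_ineq1 x ltac:(lra)) as HE1.
  set (E := exp x) in *.
  set (Z0 := zeval PZ x).
  assert (HZ0 : 0 < Z0).
  { apply (chk_strip_sound PZ IC1 C1ok ltac:(discriminate) x ltac:(lra)). unfold IC1; simpl; lra. }
  assert (HDP : IZR DP = 39916800) by reflexivity.
  set (P := Z0 / IZR DP).
  assert (HP0 : 0 < P) by (unfold P; rewrite HDP; apply Rdiv_lt_0_compat; lra).
  assert (HPE : P <= / E).
  { unfold P, Z0. rewrite PZ_T. unfold E. rewrite <- exp_Ropp.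
    destruct (exp_neg_T 11 x ltac:(lra)) as [_ H]. apply H. reflexivity. }
  assert (HEP : E * P <= 1).
  { apply Rmult_le_compat_l with (r := E) in HPE; [|lra]. rewrite Rinv_r in HPE; lra. }
  assert (HP1 : P < 1) by nra.
  assert (HZ1 : Z0 < IZR DP) by (unfold P in HP1; rewrite HDP in *; lra).
  assert (HD2 : 0 < IZR DP * IZR DP - Z0 * Z0) by (rewrite HDP in *; nra).
  assert (HDP0 : 0 < IZR DP) by (rewrite HDP; lra).
  assert (Htanh : tanh x = (E * E - 1) / (E * E + 1)).
  { unfold tanh. rewrite sinh_E, cosh_E. fold E. field. split; nra. }
  assert (Ha1 : tanh x / x <= (1 - P * P) / ((1 + P * P) * x)).
  { rewrite Htanh. replace ((E * E - 1) / (E * E + 1) / x) with ((E * E - 1) / ((E * E + 1) * x)) by (field; split; nra).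
    apply div_le_div; [nra| nra|].
    assert (0 <= E * P) by (apply Rmult_le_pos; lra).
    assert (E * P * (E * P) <= 1) by nra.
    assert (x * (E * P * (E * P) - 1) <= 0) by nra. nra. }
  set (hy := zeval hZ (x * x)).
  assert (Hhy : 0 < hy).
  { apply (chk_strip_sound hZ ICh Chok ltac:(discriminate) (x * x) ltac:(nra)). unfold ICh; simpl; nra. }
  assert (HDh : IZR Dh = 3774873600) by reflexivity.
  assert (HDk : IZR Dk = 125829120) by reflexivity.
  set (h := hy / IZR Dh).
  assert (Hh : 0 < h) by (unfold h; rewrite HDh; apply Rdiv_lt_0_compat; lra).
  assert (HC2 : 0 < zeval C2 x).
  { apply (chk_strip_sound C2 IC2 C2ok ltac:(discriminate) x ltac:(lra)). unfold IC2; simpl; lra. }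
  rewrite C2_eval in HC2. fold Z0 hy in HC2.
  assert (Ha2 : (1 - P * P) / ((1 + P * P) * x) <= h ^ 5).
  { replace ((1 - P * P) / ((1 + P * P) * x)) with ((IZR DP * IZR DP - Z0 * Z0) / ((IZR DP * IZR DP + Z0 * Z0) * x))
      by (unfold P; field; repeat split; nra).
    replace (h ^ 5) with (hy ^ 5 / IZR Dh ^ 5) by (unfold h; field; rewrite HDh; lra).
    apply div_le_div; [rewrite HDP; nra| rewrite HDh; apply pow_lt; lra| lra]. }
  assert (Hsh : 0 < sinh x) by (apply sinh_pos; lra).
  assert (Hsh2 : sinh x <= (/ P - P) / 2).
  { rewrite sinh_E. fold E. assert (E <= / P).
    { apply Rmult_le_reg_r with (r := P); [lra|]. rewrite Rinv_l; lra. }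
    assert (P <= / E) by lra. lra. }
  set (ky := zeval kZ (x * x)).
  assert (Hky : 0 < ky).
  { apply (chk_strip_sound kZ ICk Ckok ltac:(discriminate) (x * x) ltac:(nra)). unfold ICk; simpl; nra. }
  set (k := ky / IZR Dk).
  assert (Hk : 0 < k) by (unfold k; rewrite HDk; apply Rdiv_lt_0_compat; lra).
  assert (HC3 : 0 < zeval C3 x).
  { apply (chk_strip_sound C3 IC3 C3ok ltac:(discriminate) x ltac:(lra)). unfold IC3; simpl; lra. }
  rewrite C3_eval in HC3. fold Z0 ky in HC3.
  assert (Hb1 : 2 * x * P / (1 - P * P) <= x / sinh x).
  { apply div_le_div; [nra| lra|].
    replace (/ P - P) with ((1 - P * P) / P) in Hsh2 by (field; lra).
    apply Rmult_le_compat_l with (r := 2 * x * P) in Hsh2; [|nra].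
    replace (2 * x * P * ((1 - P * P) / P / 2)) with (x * (1 - P * P)) in Hsh2 by (field; lra). lra. }
  assert (Hb2 : k ^ 5 <= (2 * x * P / (1 - P * P)) ^ 3).
  { replace ((2 * x * P / (1 - P * P)) ^ 3) with (8 * IZR DP ^ 3 * (x ^ 3 * Z0 ^ 3) / (IZR DP * IZR DP - Z0 * Z0) ^ 3)
      by (unfold P; field; repeat split; lra).
    replace (k ^ 5) with (ky ^ 5 / IZR Dk ^ 5) by (unfold k; field; rewrite HDk; lra).
    apply div_le_div; [rewrite HDk; apply pow_lt; lra| rewrite HDP; apply pow_lt; nra| ].
    rewrite HDk in *. rewrite HDP in *. nra. }
  assert (Hb3 : k ^ 5 <= (x / sinh x) ^ 3).
  { eapply Rle_trans; [exact Hb2|]. apply pow_incr. split; [|exact Hb1].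
    apply Rdiv_le_0_compat; nra. }
  assert (Ha_pos : 0 < tanh x / x).
  { rewrite Htanh. apply Rdiv_lt_0_compat; [|lra]. apply Rdiv_lt_0_compat; nra. }
  assert (HA : Rpower (tanh x / x) (12 / 5) <= h ^ 12).
  { rewrite <- Rpow_5_12 by auto. apply Rle_Rpower_l; [lra|]. split; [auto| lra]. }
  assert (HB : k ^ 12 <= Rpower (x / sinh x) (36 / 5)).
  { rewrite Rpow_36 by (apply Rdiv_lt_0_compat; lra). rewrite <- Rpow_5_12 by auto.
    apply Rle_Rpower_l; [lra|]. split; [apply pow_lt; auto| auto]. }
  assert (HC4 : 0 < zeval C4 (x * x)).
  { apply (chk_strip_sound C4 IC4 C4ok ltac:(discriminate) (x * x) ltac:(nra)). unfold IC4; simpl; nra. }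
  rewrite C4_eval in HC4. fold hy ky in HC4.
  assert (Hfin : h ^ 12 < 2 / 3 * k ^ 12 + 1 / 3).
  { assert (E4 : 2 / 3 * k ^ 12 + 1 / 3 - h ^ 12 =
       (2 * IZR Dh ^ 12 * ky ^ 12 + IZR Dk ^ 12 * IZR Dh ^ 12 - 3 * IZR Dk ^ 12 * hy ^ 12) / (3 * IZR Dh ^ 12 * IZR Dk ^ 12)).
    { unfold h, k. field. rewrite HDh, HDk. lra. }
    assert (0 < 2 / 3 * k ^ 12 + 1 / 3 - h ^ 12); [|lra].
    rewrite E4. apply Rdiv_lt_0_compat; [lra|]. rewrite HDh, HDk. apply Rmult_lt_0_compat; [apply Rmult_lt_0_compat|]; try apply pow_lt; lra. }
  lra.
Qed.

Definition LZp : list Z := [(5040); (5040); (2520); (840); (210); (42); (7); (1)]%Z.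
Definition DL : Z := 5040.
Definition D1 : list Z := zadd (zmul LZp LZp) (zscal (-1) (zpow ((DL) :: nil) 2)).
Definition Wn : list Z := zadd (zmul x1 (zadd (zmul LZp LZp) (zpow ((DL) :: nil) 2))) (zscal (-1) D1).
Definition D2 : list Z := zscal 8 (zmul (zpow ((DL) :: nil) 3) (zmul (zpow x1 3) (zpow LZp 3))).
Definition Zn : list Z := zadd (zpow D1 3) (zscal (-1) D2).
Definition q1 : list Z := [17; 0; -50]%Z.
Definition q2 : list Z := [22; 0; -50]%Z.
Definition G : list Z :=
  zadd (zadd (zadd (zadd
    (zscal (-150) (zmul Wn (zmul (zpow D1 2) (zpow D2 2))))
    (zscal 15 (zmul q1 (zmul (zpow Wn 2) (zmul D1 (zpow D2 2))))))
    (zscal (-1) (zmul (zmul q1 q2) (zmul (zpow Wn 3) (zpow D2 2)))))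
    (zscal 100 (zmul Zn (zmul D2 (zpow D1 3)))))
    (zscal (-10) (zmul q1 (zmul (zpow Zn 2) (zpow D1 3)))).
Definition N3 : list Z := zadd (zscal 5 D1) (zscal (-1) (zmul q1 Wn)).
Definition S3 : list Z := zscal 8 (zmul (zpow ((DP) :: nil) 3) (zmul (zpow x1 3) (zpow PZ 3))).
Definition N4 : list Z := zadd (zscal 5 S3) (zscal (-1) (zmul q1 (zadd (zpow (zadd (zpow ((DP) :: nil) 2) (zscal (-1) P2)) 3) (zscal (-1) S3)))).
Definition Ihalf : list (Z*Z*Z) := (((2,0,1)) :: nil)%Z.
Definition Ihalf2 : list (Z*Z*Z) := [(4,0,1); (4,1,1)]%Z.

Lemma LZok : chk (zstrip LZp) Ihalf = true. Proof. vm_compute. reflexivity. Qed.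
Lemma D1ok : chk (zstrip D1) Ihalf = true. Proof. vm_compute. reflexivity. Qed.
Lemma Gok : chk (zstrip G) Ihalf = true. Proof. vm_compute. reflexivity. Qed.
Lemma N3ok : chk (zstrip N3) Ihalf = true. Proof. vm_compute. reflexivity. Qed.
Lemma N4ok : chk (zstrip N4) Ihalf2 = true. Proof. vm_compute. reflexivity. Qed.

Lemma LZ_T x : zeval LZp x / IZR DL = T 7 x.
Proof. unfold LZp, DL, zeval, T, ec. simpl. field. Qed.


Definition d1f x := (zeval LZp x * zeval LZp x - IZR DL ^ 2).
Definition wnf x := (x * (zeval LZp x * zeval LZp x + IZR DL ^ 2) - d1f x).
Definition d2f x := (8 * IZR DL ^ 3 * (x ^ 3 * zeval LZp x ^ 3)).
Definition znf x := (d1f x ^ 3 - d2f x).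
Definition c1f x := (17 - 50 * x ^ 2).
Definition c2f x := (22 - 50 * x ^ 2).
Lemma D1_eval x : zeval D1 x = d1f x.
Proof. unfold D1, d1f. zsimp. ring. Qed.
Lemma Wn_eval x : zeval Wn x = wnf x.
Proof. unfold Wn, wnf. zsimp; rewrite ?D1_eval. ring. Qed.
Lemma D2_eval x : zeval D2 x = d2f x.
Proof. unfold D2, d2f. zsimp. ring. Qed.
Lemma Zn_eval x : zeval Zn x = znf x.
Proof. unfold Zn, znf. zsimp; rewrite ?D1_eval, ?D2_eval. ring. Qed.
Lemma q1_eval x : zeval q1 x = c1f x.
Proof. unfold q1, c1f. simpl. ring. Qed.
Lemma q2_eval x : zeval q2 x = c2f x.
Proof. unfold q2, c2f. simpl. ring. Qed.
Lemma G_eval x : zeval G x =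
   -150 * (wnf x * (d1f x ^ 2 * d2f x ^ 2)) + 15 * (c1f x * (wnf x ^ 2 * (d1f x * d2f x ^ 2)))
   - (c1f x * c2f x * (wnf x ^ 3 * d2f x ^ 2)) + 100 * (znf x * (d2f x * d1f x ^ 3)) - 10 * (c1f x * (znf x ^ 2 * d1f x ^ 3)).
Proof.
  unfold G. zsimp; rewrite ?D1_eval, ?D2_eval, ?Wn_eval, ?Zn_eval, ?q1_eval, ?q2_eval. ring.
Qed.
Lemma N3_eval x : zeval N3 x = 5 * d1f x - c1f x * wnf x.
Proof. unfold N3. zsimp; rewrite ?D1_eval, ?Wn_eval, ?q1_eval. ring. Qed.
Lemma N4_eval x : zeval N4 x =
  5 * (8 * (IZR DP ^ 3 * (x ^ 3 * zeval PZ x ^ 3)))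
  - c1f x * ((IZR DP ^ 2 - zeval PZ x * zeval PZ x) ^ 3 - 8 * (IZR DP ^ 3 * (x ^ 3 * zeval PZ x ^ 3))).
Proof. unfold N4, S3, P2. zsimp; rewrite ?q1_eval. ring. Qed.

Lemma div_le_1 a b : 0 < b -> a <= b -> a / b <= 1.
Proof. intros Hb H. apply Rmult_le_reg_r with (r := b); auto. unfold Rdiv. rewrite Rmult_assoc, Rinv_l by lra. lra. Qed.

Definition Ff (p w z : R) := - w + (p + 1) / 2 * w ^ 2 - (p + 1) * (p + 2) / 6 * w ^ 3 + 2 / 3 * z - (p + 1) / 3 * z ^ 2.

Lemma Ff_w p w W z : 0 <= p -> 0 <= w <= W -> (p + 1) * W <= 1 -> Ff p W z <= Ff p w z.
Proof.
  intros Hp Hw HW.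
  assert (E : Ff p w z - Ff p W z = (W - w) * (1 - (p + 1) / 2 * (w + W) + (p + 1) * (p + 2) / 6 * (w ^ 2 + w * W + W ^ 2)))
    by (unfold Ff; ring).
  assert (0 <= (p + 1) * (p + 2) / 6 * (w ^ 2 + w * W + W ^ 2)).
  { apply Rmult_le_pos; [|nra]. apply Rmult_le_pos; [nra| lra]. }
  assert (0 <= 1 - (p + 1) / 2 * (w + W)) by nra.
  assert (0 <= (W - w) * (1 - (p + 1) / 2 * (w + W) + (p + 1) * (p + 2) / 6 * (w ^ 2 + w * W + W ^ 2)))
    by (apply Rmult_le_pos; lra).
  lra.
Qed.

Lemma Ff_z p W z Zl Zu : 0 <= p -> Zl <= z <= Zu -> (p + 1) * Zu <= 1 -> Ff p W Zl <= Ff p W z.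
Proof.
  intros Hp Hz HZ.
  assert (E : Ff p W z - Ff p W Zl = (z - Zl) * (2 / 3 - (p + 1) / 3 * (z + Zl))) by (unfold Ff; ring).
  assert (0 <= 2 / 3 - (p + 1) / 3 * (z + Zl)) by nra.
  assert (0 <= (z - Zl) * (2 / 3 - (p + 1) / 3 * (z + Zl))) by (apply Rmult_le_pos; lra).
  lra.
Qed.

Lemma nec p : 0 < p < 12 / 5 ->
  exists x, 0 < x /\ 2 / 3 * Rpower (x / sinh x) (3 * p) + 1 / 3 <= Rpower (tanh x / x) p.
Proof.
  intros Hp.
  set (x := sqrt ((12 - 5 * p) / 50)).
  assert (Hx0 : 0 < x) by (apply sqrt_lt_R0; lra).
  assert (Hxx : x * x = (12 - 5 * p) / 50) by (apply sqrt_sqrt; lra).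
  assert (Hp2 : p = 12 / 5 - 10 * (x * x)) by lra.
  assert (Hxh : x <= 1 / 2) by nra.
  exists x. split; [exact Hx0|].
  pose proof (exp_pos x) as HEp. pose proof (exp_ineq1 x ltac:(lra)) as HE1.
  set (E := exp x) in *.
  set (l := zeval LZp x).
  assert (HDL : IZR DL = 5040) by reflexivity.
  assert (Hl : 0 < l).
  { apply (chk_strip_sound LZp Ihalf LZok ltac:(discriminate) x Hx0). unfold Ihalf; simpl; lra. }
  assert (Hd1 : 0 < d1f x).
  { rewrite <- D1_eval. apply (chk_strip_sound D1 Ihalf D1ok ltac:(discriminate) x Hx0). unfold Ihalf; simpl; lra. }
  unfold d1f in Hd1. fold l in Hd1.
  set (L := l / IZR DL).
  assert (HLE : L <= E) by (unfold L, l; rewrite LZ_T; apply exp_ge_T; lra).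
  assert (HL1 : 1 < L).
  { unfold L. rewrite HDL in *. apply Rmult_lt_reg_r with (r := 5040); [lra|].
    unfold Rdiv. rewrite Rmult_assoc, Rinv_l by lra. nra. }
  set (Z0 := zeval PZ x).
  assert (HZ0 : 0 < Z0).
  { apply (chk_strip_sound PZ IC1 C1ok ltac:(discriminate) x Hx0). unfold IC1; simpl; lra. }
  assert (HDP : IZR DP = 39916800) by reflexivity.
  set (P := Z0 / IZR DP).
  assert (HP0 : 0 < P) by (unfold P; rewrite HDP; apply Rdiv_lt_0_compat; lra).
  assert (HPE : P <= / E).
  { unfold P, Z0. rewrite PZ_T. unfold E. rewrite <- exp_Ropp.
    destruct (exp_neg_T 11 x ltac:(lra)) as [_ H]. apply H. reflexivity. }
  assert (HEP : E * P <= 1).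
  { apply Rmult_le_compat_l with (r := E) in HPE; [|lra]. rewrite Rinv_r in HPE; lra. }
  assert (HP1 : P < 1) by nra.
  assert (Hsh : sinh x = (E - / E) / 2) by (unfold E; apply sinh_E).
  assert (Hch : cosh x = (E + / E) / 2) by (unfold E; apply cosh_E).
  assert (Hshp : 0 < sinh x) by (apply sinh_pos; lra).
  assert (Hchp : 1 <= cosh x) by apply cosh_ge1.
  set (w := x * cosh x / sinh x - 1).
  assert (Hw0 : 0 <= w).
  { unfold w. pose proof (xcosh_ge_sinh x ltac:(lra)).
    assert (1 <= x * cosh x / sinh x); [|lra].
    apply Rmult_le_reg_r with (r := sinh x); [lra|]. unfold Rdiv. rewrite Rmult_assoc, Rinv_l by lra. lra. }
  set (W := x * (L * L + 1) / (L * L - 1) - 1).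
  assert (HwW : w <= W).
  { unfold w, W. rewrite Hsh, Hch.
    replace (x * ((E + / E) / 2) / ((E - / E) / 2)) with (x * (E * E + 1) / (E * E - 1)) by (field; split; nra).
    assert ((E * E + 1) / (E * E - 1) <= (L * L + 1) / (L * L - 1)).
    { apply div_le_div; [nra| nra|]. nra. }
    unfold Rdiv in *. rewrite !Rmult_assoc. apply Rplus_le_compat_r. apply Rmult_le_compat_l; lra. }
  set (z := (sinh x / x) ^ 3 - 1).
  set (Zl := ((L * L - 1) / (2 * x * L)) ^ 3 - 1).
  set (Zu := ((1 - P * P) / (2 * x * P)) ^ 3 - 1).
  assert (HzZl : Zl <= z).
  { unfold Zl, z. apply Rplus_le_compat_r. apply pow_incr. split.
    - apply Rdiv_le_0_compat; nra.
    - rewrite Hsh. apply div_le_div; [nra| lra|].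
      assert (/ E <= / L) by (apply Rinv_le_contravar; lra).
      assert (HLi : L * / L = 1) by (field; lra).
      assert ((E - / E) / 2 * (2 * x * L) >= x * (L * L - 1)); [|nra].
      assert (E - / E >= L - / L) by lra.
      assert ((E - / E) * L >= (L - / L) * L) by nra.
      replace ((L - / L) * L) with (L * L - 1) in * by (field; lra). nra. }
  assert (HzZu : z <= Zu).
  { unfold Zu, z. apply Rplus_le_compat_r. apply pow_incr. split.
    - apply Rdiv_le_0_compat; lra.
    - rewrite Hsh. apply div_le_div; [lra| nra|].
      assert (E <= / P) by (apply Rmult_le_reg_r with (r := P); [lra|]; rewrite Rinv_l; lra).
      assert (P <= / E) by lra.
      assert ((E - / E) * (2 * x * P) <= (/ P - P) * (2 * x * P)).
      { apply Rmult_le_compat_r; nra. }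
      replace ((/ P - P) * (2 * x * P)) with ((1 - P * P) * (2 * x)) in * by (field; lra). nra. }
  assert (HN3 : 0 < zeval N3 x).
  { apply (chk_strip_sound N3 Ihalf N3ok ltac:(discriminate) x Hx0). unfold Ihalf; simpl; lra. }
  rewrite N3_eval in HN3. unfold wnf, c1f in HN3. unfold d1f in HN3. fold l in HN3.
  assert (HW1 : (p + 1) * W <= 1).
  { unfold W, L. rewrite Hp2. rewrite HDL in *.
    assert (E1 : (12 / 5 - 10 * (x * x) + 1) * (x * (l / 5040 * (l / 5040) + 1) / (l / 5040 * (l / 5040) - 1) - 1)
       = (17 - 50 * x ^ 2) * (x * (l * l + 5040 ^ 2) - (l * l - 5040 ^ 2)) / (5 * (l * l - 5040 ^ 2)))
       by (field; repeat split; nra).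
    rewrite E1. apply div_le_1; [nra|]. lra. }
  assert (HN4 : 0 < zeval N4 x).
  { apply (chk_strip_sound N4 Ihalf2 N4ok ltac:(discriminate) x Hx0). unfold Ihalf2; simpl; lra. }
  rewrite N4_eval in HN4. unfold c1f in HN4. fold Z0 in HN4.
  assert (HZu1 : (p + 1) * Zu <= 1).
  { unfold Zu, P. rewrite Hp2. rewrite HDP in *.
    set (S := 8 * (39916800 ^ 3 * (x ^ 3 * Z0 ^ 3))) in *.
    assert (HS : 0 < S) by (unfold S; apply Rmult_lt_0_compat; [lra|]; apply Rmult_lt_0_compat; [apply pow_lt; lra|];
                             apply Rmult_lt_0_compat; apply pow_lt; lra).
    assert (E1 : (12 / 5 - 10 * (x * x) + 1) * (((1 - Z0 / 39916800 * (Z0 / 39916800)) / (2 * x * (Z0 / 39916800))) ^ 3 - 1)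
      = (17 - 50 * x ^ 2) * ((39916800 ^ 2 - Z0 * Z0) ^ 3 - S) / (5 * S)) by (unfold S; field; lra).
    rewrite E1. apply div_le_1; [lra|]. lra. }
  assert (HG : 0 < zeval G x).
  { apply (chk_strip_sound G Ihalf Gok ltac:(discriminate) x Hx0). unfold Ihalf; simpl; lra. }
  rewrite G_eval in HG.
  assert (HF : 0 <= Ff p W Zl).
  { unfold wnf, znf, c1f, c2f in HG. unfold d1f, d2f in HG. fold l in HG. rewrite HDL in HG.
    set (d1 := l * l - 5040 ^ 2) in *.
    set (d2 := 8 * 5040 ^ 3 * (x ^ 3 * l ^ 3)) in *.
    assert (Hd2 : 0 < d2) by (unfold d2; apply Rmult_lt_0_compat; [lra|]; apply Rmult_lt_0_compat; apply pow_lt; lra).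
    assert (Hd1' : 0 < d1) by (unfold d1; rewrite HDL in Hd1; lra).
    assert (HWe : W = (x * (l * l + 5040 ^ 2) - d1) / d1).
    { unfold W, L, d1. rewrite HDL. assert (l * l - 25401600 > 0) by (unfold d1 in Hd1'; lra). field. repeat split; lra. }
    assert (HZe : Zl = (d1 ^ 3 - d2) / d2).
    { unfold Zl, L, d1, d2. rewrite HDL. field. lra. }
    rewrite HWe, HZe, Hp2.
    match type of HG with 0 < ?g =>
      assert (Eq : Ff (12 / 5 - 10 * (x * x)) ((x * (l * l + 5040 ^ 2) - d1) / d1) ((d1 ^ 3 - d2) / d2)
                  = g / (150 * d1 ^ 3 * d2 ^ 2)) by (unfold Ff; field; lra) end.
    rewrite Eq. left. apply Rdiv_lt_0_compat; [exact HG|].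
    apply Rmult_lt_0_compat; [apply Rmult_lt_0_compat; [lra| apply pow_lt; lra]| apply pow_lt; lra]. }
  assert (HFw : 0 <= Ff p w z).
  { pose proof (Ff_w p w W z ltac:(lra) ltac:(lra) HW1).
    pose proof (Ff_z p W z Zl Zu ltac:(lra) ltac:(lra) HZu1). lra. }
  assert (Ha : tanh x / x = / (1 + w)).
  { unfold w, tanh. field. assert (0 < x * cosh x) by (apply Rmult_lt_0_compat; lra). repeat split; lra. }
  assert (Hz0 : 0 <= z).
  { unfold z. pose proof (sinh_ge_x x ltac:(lra)).
    assert (1 <= sinh x / x) by (apply Rmult_le_reg_r with (r := x); [lra|]; unfold Rdiv; rewrite Rmult_assoc, Rinv_l; lra).
    assert (1 <= (sinh x / x) ^ 3) by (replace 1 with (1 ^ 3) by ring; apply pow_incr; lra). lra. }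
  assert (Hb : Rpower (x / sinh x) (3 * p) = Rpower (1 + z) (- p)).
  { replace (3 * p) with (INR 3 * p) by (simpl; ring).
    rewrite <- Rpower_mult. rewrite Rpower_pow by (apply Rdiv_lt_0_compat; lra).
    replace ((x / sinh x) ^ 3) with (/ (1 + z)) by (unfold z; field; assert (0 < sinh x ^ 3) by (apply pow_lt; lra); repeat split; lra).
    rewrite Rpower_inv_base by lra. rewrite Rpower_Ropp. reflexivity. }
  assert (Ha2 : Rpower (tanh x / x) p = Rpower (1 + w) (- p)).
  { rewrite Ha. rewrite Rpower_inv_base by lra. rewrite Rpower_Ropp. reflexivity. }
  rewrite Ha2, Hb.
  pose proof (L3 p w ltac:(lra) Hw0) as H3.
  pose proof (L2 p z ltac:(lra) Hz0) as H2.
  assert (Eq : (1 - p * w + p * (p + 1) / 2 * w ^ 2 - p * (p + 1) * (p + 2) / 6 * w ^ 3)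
     - (2 / 3 * (1 - p * z + p * (p + 1) / 2 * z ^ 2) + 1 / 3) = p * Ff p w z) by (unfold Ff; field).
  assert (0 <= p * Ff p w z) by (apply Rmult_le_pos; lra).
  lra.
Qed.

Lemma tanh_lt1 x : 0 < x -> tanh x < 1.
Proof.
  intros Hx. unfold tanh. pose proof (cosh_ge1 x).
  assert (sinh x < cosh x).
  { rewrite sinh_E, cosh_E. pose proof (exp_pos x). assert (0 < / exp x) by (apply Rinv_0_lt_compat; lra). lra. }
  apply Rmult_lt_reg_r with (r := cosh x); [lra|]. unfold Rdiv. rewrite Rmult_assoc, Rinv_l by lra. lra.
Qed.

Lemma tanh_pos x : 0 < x -> 0 < tanh x.
Proof. intros Hx. unfold tanh. apply Rdiv_lt_0_compat; [apply sinh_pos; auto| pose proof (cosh_ge1 x); lra]. Qed.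

Lemma suff_125 x : 0 < x -> Rpower (tanh x / x) (12 / 5) < 2 / 3 * Rpower (x / sinh x) (36 / 5) + 1 / 3.
Proof.
  intros Hx. destruct (Rle_or_lt x (8 / 5)) as [Hs|Hs]; [apply suff_small; lra|].
  pose proof (tanh_lt1 x Hx) as Ht1. pose proof (tanh_pos x Hx) as Ht0.
  assert (Ha : tanh x / x < 5 / 8).
  { apply Rmult_lt_reg_r with (r := x); [lra|]. unfold Rdiv. rewrite Rmult_assoc, Rinv_l by lra. lra. }
  assert (Ha0 : 0 < tanh x / x) by (apply Rdiv_lt_0_compat; lra).
  assert (H1 : Rpower (tanh x / x) (12 / 5) < Rpower (5 / 8) (12 / 5)) by (apply Rlt_Rpower_l; lra).
  assert (H2 : Rpower (5 / 8) (12 / 5) < 1 / 3).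
  { set (r := Rpower (5 / 8) (12 / 5)).
    assert (Hr0 : 0 < r) by (unfold r, Rpower; apply exp_pos).
    assert (Hr5 : r ^ 5 = (5 / 8) ^ 12).
    { unfold r. rewrite <- (Rpower_pow 5) by (apply exp_pos). rewrite Rpower_mult.
      rewrite <- (Rpower_pow 12) by lra. f_equal. simpl. field. }
    destruct (Rlt_or_le r (1 / 3)) as [?|Hge]; auto.
    assert (Hq : (1 / 3) ^ 5 <= r ^ 5) by (apply pow_incr; lra). rewrite Hr5 in Hq. lra. }
  assert (0 < Rpower (x / sinh x) (36 / 5)) by (unfold Rpower; apply exp_pos).
  lra.
Qed.

Lemma suff_pos p x : 12 / 5 <= p -> 0 < x ->
  Rpower (tanh x / x) p < 2 / 3 * Rpower (x / sinh x) (3 * p) + 1 / 3.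
Proof.
  intros Hp Hx. pose proof (suff_125 x Hx) as H.
  set (r := p / (12 / 5)).
  assert (Hr : 1 <= r) by (unfold r; apply Rmult_le_reg_r with (r := 12 / 5); [lra|]; unfold Rdiv; rewrite Rmult_assoc, Rinv_l; lra).
  pose proof (tanh_lt1 x Hx) as Ht1. pose proof (tanh_pos x Hx) as Ht0.
  assert (Ha0 : 0 < tanh x / x) by (apply Rdiv_lt_0_compat; lra).
  set (A := Rpower (tanh x / x) (12 / 5)) in *.
  set (B := Rpower (x / sinh x) (36 / 5)) in *.
  assert (HA0 : 0 < A) by (unfold A, Rpower; apply exp_pos).
  assert (HB0 : 0 < B) by (unfold B, Rpower; apply exp_pos).
  assert (E1 : Rpower (tanh x / x) p = Rpower A r) by (unfold A, r; rewrite Rpower_mult; f_equal; field).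
  assert (E2 : Rpower (x / sinh x) (3 * p) = Rpower B r) by (unfold B, r; rewrite Rpower_mult; f_equal; field).
  rewrite E1, E2.
  assert (H1 : Rpower A r < Rpower (2 / 3 * B + (1 - 2 / 3)) r).
  { apply Rlt_Rpower_l; [lra|]. split; lra. }
  pose proof (jensen r (2 / 3) B Hr ltac:(lra) HB0). lra.
Qed.

Lemma Rpower_neg_anti a b p : p < 0 -> 0 < b <= a -> Rpower a p <= Rpower b p.
Proof.
  intros Hp Hab. unfold Rpower. pose proof (ln_le_mono b a ltac:(lra) ltac:(lra)).
  destruct (Req_dec (p * ln a) (p * ln b)) as [E|E]; [rewrite E; lra|].
  left. apply exp_increasing. nra.
Qed.

Lemma suff_neg p x : p < 0 -> 0 < x ->
  Rpower (tanh x / x) p < 2 / 3 * Rpower (x / sinh x) (3 * p) + 1 / 3.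
Proof.
  intros Hp Hx.
  pose proof (sinh_pos x Hx). pose proof (cosh_ge1 x).
  pose proof (lazarevic x Hx) as Hl.
  assert (Hc1 : 1 < cosh x).
  { rewrite cosh_E. pose proof (exp_pos x). pose proof (exp_ineq1 x ltac:(lra)).
    assert (exp x + / exp x - 2 = (exp x - 1) ^ 2 / exp x) by (field; lra).
    assert (0 < (exp x - 1) ^ 2 / exp x) by (apply Rdiv_lt_0_compat; [apply pow_lt; lra| lra]). lra. }
  set (c := x / sinh x).
  assert (Hc0 : 0 < c) by (unfold c; apply Rdiv_lt_0_compat; lra).
  assert (Hxs : x < sinh x).
  { destruct (Rlt_or_le x (sinh x)) as [?|Hge]; auto.
    assert (sinh x ^ 3 <= x ^ 3) by (apply pow_incr; lra).
    assert (x ^ 3 < x ^ 3 * cosh x) by (assert (0 < x ^ 3) by (apply pow_lt; lra); nra). lra. }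
  assert (Hc1' : c < 1) by (unfold c; apply Rmult_lt_reg_r with (r := sinh x); [lra|]; unfold Rdiv; rewrite Rmult_assoc, Rinv_l; lra).
  assert (Ha : c ^ 2 <= tanh x / x).
  { unfold c, tanh. assert (0 < x ^ 3) by (apply pow_lt; lra).
    replace ((x / sinh x) ^ 2) with (x ^ 2 / sinh x ^ 2) by (field; lra).
    replace (sinh x / cosh x / x) with (sinh x / (cosh x * x)) by (field; lra).
    apply div_le_div; [apply pow_lt; lra| nra|]. nra. }
  assert (Hc20 : 0 < c ^ 2) by (apply pow_lt; lra).
  assert (H1 : Rpower (tanh x / x) p <= Rpower c (2 * p)).
  { replace (2 * p) with (INR 2 * p) by (simpl; ring). rewrite <- Rpower_mult, Rpower_pow by lra.
    apply Rpower_neg_anti; lra. }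
  set (u := p * ln c).
  assert (Hu : 0 < u).
  { unfold u. assert (ln c < 0) by (rewrite <- ln_1; apply ln_increasing; lra). nra. }
  assert (E2 : Rpower c (2 * p) = exp (2 * u)) by (unfold Rpower, u; f_equal; ring).
  assert (E3 : Rpower c (3 * p) = exp (3 * u)) by (unfold Rpower, u; f_equal; ring).
  fold c. rewrite E3. rewrite E2 in H1.
  assert (X1 : 1 + u < exp u) by (apply exp_ineq1; lra).
  assert (X2 : 1 + - (2 * u) < exp (- (2 * u))) by (apply exp_ineq1; lra).
  assert (X3 : exp (3 * u) = exp (2 * u) * exp u) by (rewrite <- exp_plus; f_equal; ring).
  assert (X4 : exp (2 * u) * exp (- (2 * u)) = 1) by (rewrite <- exp_plus; replace (2 * u + - (2 * u)) with 0 by ring; apply exp_0).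
  pose proof (exp_pos (2 * u)).
  assert (exp (2 * u) * (1 + u) < exp (3 * u)) by (rewrite X3; apply Rmult_lt_compat_l; lra).
  assert (exp (2 * u) * (1 - 2 * u) < 1) by (rewrite <- X4; apply Rmult_lt_compat_l; lra).
  lra.
Qed.

Theorem proposition4p13 (p : R) (hp : p <> 0) :
  (forall x : R, 0 < x ->
     Rpower (tanh x / x) p < 2 / 3 * Rpower (x / sinh x) (3 * p) + 1 / 3)
  <-> (p < 0 \/ 12 / 5 <= p).
Proof.
  split.
  - intros H. destruct (Rlt_or_le p 0) as [?|H0]; [left; auto|].
    destruct (Rle_or_lt (12 / 5) p) as [?|H1]; [right; auto|].
    exfalso. destruct (nec p ltac:(lra)) as [x [Hx Hf]]. specialize (H x Hx). lra.
  - intros [H|H] x Hx; [apply suff_neg| apply suff_pos]; auto.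
Qed.
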